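(* For $n\ge2$, $$\mathbf{cf}_{n,2}(p,q)|_{p^0}=q^{\binom{n-1}{2}}[n-1]_q.$$ Moreover, $\mathbf{cf}_{4,2}(p,q)|_{p^1}=q^2+q^3$, and for $n\ge5$, $$\mathbf{cf}_{n,2}(p,q)|_{p^1}=\binom{n-2}{2}q^{\binom{n}{2}-3}+q^{\binom{n-1}{2}-2}\sum_{i=0}^{n-3}\left(\binom{n-3}{2}+i\right)q^i.$$
   Context: $F_1(p,q)=q$, $F_2(p,q)=q^2$ and $F_m(p,q)=qF_{m-1}(p,q)+pF_{m-2}(p,q)$ for $m\ge3$. Let $(x)_{\uparrow_{F,p,q,0}}=1$ and $(x)_{\uparrow_{F,p,q,k}}=x(x+F_1(p,q))\cdots(x+F_{k-1}(p,q))$ for $k\ge1$. Define the polynomials $\mathbf{cf}_{n,k}(p,q)$ for $0\le k\le n$ by $(x)_{\uparrow_{F,p,q,n}}=\sum_{k=0}^n\mathbf{cf}_{n,k}(p,q)x^k$. For a polynomial $f$ in $p$ with coefficients in $\mathbb{Q}[q]$, $f|_{p^s}$ denotes the coefficient of $p^s$. $[m]_q=1+q+\cdots+q^{m-1}$. *)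

(* Defs.v *)
From mathcomp Require Import all_boot all_order all_algebra.
Set Implicit Arguments. Unset Strict Implicit. Unset Printing Implicit Defensive.
Import GRing.Theory.
Local Open Scope ring_scope.

(* Polynomials in p with coefficients in Q[q]: type {poly {poly rat}}.
   The outer variable is p, the inner variable 'X : {poly rat} is q. *)
Definition PQ := {poly {poly rat}}.

Definition qv : PQ := ('X : {poly rat})%:P.
Definition pv : PQ := 'X.

(* F_m(p,q); F_0 := 0 is only a filler value, never used below. *)
Fixpoint Fpq (m : nat) : PQ :=
  match m with
  | 0 => 0
  | S m1 => match m1 with
            | 0 => qv
            | 1 => qv ^+ 2
            | S m2 => qv * Fpq m1 + pv * Fpq m2
            end
  end.

Definition rising (k : nat) : {poly PQ} :=
  match k with
  | 0 => 1
  | S k' => 'X * \prod_(1 <= i < k) ('X + (Fpq i)%:P)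
  end.

Definition cf (n k : nat) : PQ := (rising n)`_k.

Definition coefp_ (f : PQ) (s : nat) : {poly rat} := f`_s.

Definition qint (m : nat) : {poly rat} := \sum_(i < m) 'X^i.

(* Main.v *)
Require Import Defs.
From mathcomp Require Import all_boot all_order all_algebra ring.
Import GRing.Theory.
Local Open Scope ring_scope.

Lemma Fpq_rec j : Fpq j.+3 = qv * Fpq j.+2 + pv * Fpq j.+1.
Proof. by []. Qed.

Lemma coef_qv (f : PQ) i : (qv * f)`_i = 'X * f`_i.
Proof. by rewrite /qv coefCM. Qed.
Lemma coef_pv0 (f : PQ) : (pv * f)`_0 = 0.
Proof. by rewrite /pv coefXM. Qed.
Lemma coef_pv1 (f : PQ) : (pv * f)`_1 = f`_0.
Proof. by rewrite /pv coefXM. Qed.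

Lemma Fpq2 : Fpq 2 = ('X^2 : {poly rat})%:P.
Proof. by rewrite /= /qv rmorphXn. Qed.

Lemma F0 j : (Fpq j.+1)`_0 = 'X^(j.+1) /\ (Fpq j.+2)`_0 = 'X^(j.+2).
Proof.
elim: j => [|j [_ IH2]].
  by rewrite Fpq2 coefC /= /qv coefC expr1.
split=> //.
by rewrite Fpq_rec coefD coef_qv coef_pv0 IH2 addr0 -exprS.
Qed.

Lemma F1 j : (Fpq j.+2)`_1 = j%:R * 'X^j /\ (Fpq j.+3)`_1 = j.+1%:R * 'X^(j.+1).
Proof.
elim: j => [|j [_ IH2]].
  split; first by rewrite Fpq2 coefC /= mul0r.
  rewrite Fpq_rec coefD coef_qv coef_pv1 Fpq2 coefC /= /qv coefC /=.
  by rewrite mulr0 add0r mul1r expr1.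
split=> //.
rewrite Fpq_rec coefD coef_qv coef_pv1 IH2 (proj2 (F0 j)).
rewrite !exprS; ring.
Qed.

Lemma F1_1 : (Fpq 1)`_1 = 0.
Proof. by rewrite /= /qv coefC. Qed.

Definition Pm (m : nat) : {poly PQ} := \prod_(1 <= i < m.+1) ('X + (Fpq i)%:P).

Lemma Pm0 : Pm 0 = 1.
Proof. by rewrite /Pm big_geq. Qed.

Lemma PmS m : Pm m.+1 = Pm m * ('X + (Fpq m.+1)%:P).
Proof. by rewrite /Pm big_nat_recr. Qed.

Lemma coefPlin0 (P : {poly PQ}) c : (P * ('X + c%:P))`_0 = P`_0 * c.
Proof. by rewrite mulrDr coefD coefMX coefMC add0r. Qed.
Lemma coefPlin1 (P : {poly PQ}) c : (P * ('X + c%:P))`_1 = P`_0 + P`_1 * c.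
Proof. by rewrite mulrDr coefD coefMX coefMC. Qed.

Lemma coefM0 (a b : PQ) : (a * b)`_0 = a`_0 * b`_0.
Proof. by rewrite coefM big_ord1. Qed.
Lemma coefM1 (a b : PQ) : (a * b)`_1 = a`_0 * b`_1 + a`_1 * b`_0.
Proof. by rewrite coefM big_ord_recr big_ord1 /=. Qed.

Definition A0 m := ((Pm m)`_0)`_0.
Definition A1 m := ((Pm m)`_0)`_1.
Definition B0 m := ((Pm m)`_1)`_0.
Definition B1 m := ((Pm m)`_1)`_1.

Lemma A0S m : A0 m.+1 = A0 m * (Fpq m.+1)`_0.
Proof. by rewrite /A0 PmS coefPlin0 coefM0. Qed.
Lemma A1S m : A1 m.+1 = A0 m * (Fpq m.+1)`_1 + A1 m * (Fpq m.+1)`_0.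
Proof. by rewrite /A1 PmS coefPlin0 coefM1. Qed.
Lemma B0S m : B0 m.+1 = A0 m + B0 m * (Fpq m.+1)`_0.
Proof. by rewrite /B0 PmS coefPlin1 coefD coefM0. Qed.
Lemma B1S m : B1 m.+1 = A1 m + (B0 m * (Fpq m.+1)`_1 + B1 m * (Fpq m.+1)`_0).
Proof. by rewrite /B1 PmS coefPlin1 coefD coefM1. Qed.

Lemma binS2 n : 'C(n.+1, 2) = ('C(n, 2) + n)%N.
Proof. by rewrite binS bin1. Qed.

Lemma A0E m : A0 m = 'X^('C(m.+1, 2)).
Proof.
elim: m => [|m IH]; first by rewrite /A0 Pm0 coef1 /= coef1.
by rewrite A0S IH (proj1 (F0 m)) -exprD [X in _ = 'X^X]binS2 addnS.
Qed.

Lemma A1_0 : A1 0 = 0.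
Proof. by rewrite /A1 Pm0 coef1 /= coefC. Qed.
Lemma B0_0 : B0 0 = 0.
Proof. by rewrite /B0 Pm0 coef1 /= coefC. Qed.
Lemma B1_0 : B1 0 = 0.
Proof. by rewrite /B1 Pm0 coef1 /= coefC. Qed.
Lemma A1_1 : A1 1 = 0.
Proof. by rewrite A1S F1_1 A1_0 !mul0r mulr0 addr0. Qed.
Lemma B1_1 : B1 1 = 0.
Proof. by rewrite B1S A1_0 B0_0 B1_0 !mul0r !addr0. Qed.

Lemma A1E j : 'X^2 * A1 j.+1 = 'C(j,2)%:R * 'X^('C(j.+2,2)).
Proof.
elim: j => [|j IH]; first by rewrite A1_1 mulr0 mul0r.
rewrite A1S.
have -> : 'X^2 * (A0 j.+1 * (Fpq j.+2)`_1 + A1 j.+1 * (Fpq j.+2)`_0)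
  = 'X^2 * A0 j.+1 * (Fpq j.+2)`_1 + ('X^2 * A1 j.+1) * (Fpq j.+2)`_0 by ring.
rewrite IH A0E (proj1 (F1 j)) (proj2 (F0 j)) (binS2 j.+2) (binS2 j.+1) (binS2 j).
set c := 'C(j,2); clearbody c.
rewrite !natrD !exprD !exprS; ring.
Qed.

Lemma qintS m : qint m.+1 = qint m + 'X^m.
Proof. by rewrite /qint big_ord_recr. Qed.

Lemma qintS' m : qint m.+1 = 1 + 'X * qint m.
Proof.
rewrite /qint big_ord_recl expr0 mulr_sumr; congr (_ + _).
by apply: eq_bigr => i _; rewrite exprS.
Qed.

Lemma B0E m : B0 m = 'X^('C(m,2)) * qint m.
Proof.
elim: m => [|m IH]; first by rewrite B0_0 /qint big_ord0 mulr0.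
rewrite B0S IH A0E qintS' (proj1 (F0 m)) (binS2 m).
set c := 'C(m,2); clearbody c.
rewrite !exprD !exprS; ring.
Qed.

Definition Sk k : {poly rat} := \sum_(i < k.+1) ('C(k,2)+i)%:R * 'X^i.

Lemma SkS k : Sk k.+1 = 'C(k.+1,2)%:R + 'X * Sk k + k.+1%:R * 'X * qint k.+1.
Proof.
rewrite /Sk big_ord_recl /= addn0 expr0 mulr1 -addrA; congr (_ + _).
rewrite /qint !mulr_sumr -big_split; apply: eq_bigr => i _ /=.
rewrite /bump /= add1n binS2 !natrD exprS; ring.
Qed.

Lemma B1E k : 'X^3 * B1 k.+2 =
  'C(k.+1,2)%:R * 'X^('C(k.+3,2)) + 'X^('C(k.+2,2) + 1) * Sk k.
Proof.
elim: k => [|k IH].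
  rewrite B1S A1_1 B1_1 (proj1 (F1 0)) /Sk big_ord1 /=.
  rewrite (_ : 'C(1,2) = 0%N) // (_ : ('C(0,2) + 0 = 0)%N) //.
  by rewrite !(mul0r, mulr0, addr0, add0r).
rewrite B1S.
have -> : 'X^3 * (A1 k.+2 + (B0 k.+2 * (Fpq k.+3)`_1 + B1 k.+2 * (Fpq k.+3)`_0))
  = 'X * ('X^2 * A1 k.+2) + 'X^3 * B0 k.+2 * (Fpq k.+3)`_1
    + ('X^3 * B1 k.+2) * (Fpq k.+3)`_0 by ring.
rewrite A1E IH B0E (proj2 (F1 k)) (proj2 (F0 k.+1)) SkS (qintS k.+1).
rewrite (binS2 k.+3) (binS2 k.+2) (binS2 k.+1).
set c := 'C(k.+1,2); clearbody c.
rewrite !natrD !exprD !exprS; ring.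
Qed.

From mathcomp Require Import zify.

Lemma X3_neq0 : ('X^3 : {poly rat}) != 0.
Proof. by rewrite expf_neq0 // polyX_eq0. Qed.

Lemma B1L k : (1 <= k)%N -> B1 k.+2 =
  'C(k.+1,2)%:R * 'X^('C(k.+3,2) - 3) + 'X^('C(k.+2,2) - 2) * Sk k.
Proof.
move=> hk; apply: (mulfI X3_neq0); rewrite B1E mulrDr.
have h1 : (3 + ('C(k.+3,2) - 3))%N = 'C(k.+3,2) by rewrite !binS2; lia.
have h2 : (3 + ('C(k.+2,2) - 2))%N = ('C(k.+2,2) + 1)%N by rewrite !binS2; lia.
by rewrite (mulrCA 'X^3) -exprD (mulrA 'X^3) -exprD h1 h2.
Qed.

Lemma cfE m : coefp_ (cf m.+1 2) 0 = B0 m /\ coefp_ (cf m.+1 2) 1 = B1 m.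
Proof. by rewrite /coefp_ /cf /rising -/(Pm m) coefXM /=. Qed.

Theorem theorem15 :
  (forall n : nat, (2 <= n)%N ->
     coefp_ (cf n 2) 0 = 'X^('C(n.-1, 2)) * qint n.-1)
  /\ coefp_ (cf 4 2) 1 = 'X^2 + 'X^3
  /\ (forall n : nat, (5 <= n)%N ->
     coefp_ (cf n 2) 1 =
       ('C(n - 2, 2))%:R *: 'X^('C(n, 2) - 3)
       + 'X^('C(n.-1, 2) - 2) *
         \sum_(0 <= i < n - 2) (('C(n - 3, 2) + i)%:R *: 'X^i)).
Proof.
split.
  case=> [//|m] _; by rewrite (proj1 (cfE m)) B0E.
split.
  rewrite (proj2 (cfE 3)) (@B1L 1) // /Sk big_ord_recr big_ord1 /=.
  rewrite (_ : 'C(2,2) = 1%N) // (_ : ('C(4,2) - 3 = 3)%N) //.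
  rewrite (_ : ('C(3,2) - 2 = 1)%N) // (_ : ('C(1,2) = 0)%N) //.
  rewrite !(mul0r, add0r, mul1r, expr0, expr1, mulr1) addrC.
  by rewrite expr2.
move=> [|[|[|[|[|n]]]]] // _.
rewrite (proj2 (cfE _)) (@B1L n.+2) //.
rewrite !subSS !subn0 /Sk big_mkord; congr (_ + _ * _).
  by rewrite scaler_nat mulr_natl.
by apply: eq_bigr => i _; rewrite scaler_nat mulr_natl.
Qed.
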